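(* Let $d \ge 2$. As $\{r^{(1)}, r^{(2)}\}$ ranges over all pairs of incomparable points of $(0,1)^d$ whose $2d$ coordinates are all distinct, the set of possible values of the number $\gamma$ of generators of their record-setting region is exactly $\{ d + a(d-a) : 1 \le a \le \lfloor d/2 \rfloor\}$.
   Context: For $x,y \in \mathbb{R}^d$, $x \prec y$ means $x_j < y_j$ for all $j$, and $x \le y$ means $x_j \le y_j$ for all $j$; points are incomparable if neither is $\le$ the other. The record-setting region of points $r^{(1)},\dots,r^{(\rho)}$ is $S := \{x \in [0,1)^d : x \not\prec r^{(i)} \text{ for all } i \in [\rho]\}$, and its generators are the minimal elements of $S$ with respect to $\le$. *)

(* Defs.v *)
From mathcomp Require Import all_boot.
From Stdlib Require Import Reals List.
Set Implicit Arguments. Unset Strict Implicit. Unset Printing Implicit Defensive.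

Definition pt (d : nat) := 'I_d -> R.

Definition ltv {d} (x y : pt d) : Prop := forall j : 'I_d, (x j < y j)%R.
Definition lev {d} (x y : pt d) : Prop := forall j : 'I_d, (x j <= y j)%R.
Definition incomparable {d} (x y : pt d) : Prop := ~ lev x y /\ ~ lev y x.

Definition in_unit_cube_co {d} (x : pt d) : Prop :=
  forall j : 'I_d, (0 <= x j)%R /\ (x j < 1)%R.
Definition in_unit_cube_oo {d} (x : pt d) : Prop :=
  forall j : 'I_d, (0 < x j)%R /\ (x j < 1)%R.

Definition in_record_region {d} (rs : list (pt d)) (x : pt d) : Prop :=
  in_unit_cube_co x /\ forall r, In r rs -> ~ ltv x r.

Definition generator {d} (rs : list (pt d)) (x : pt d) : Prop :=
  in_record_region rs x /\
  forall y, in_record_region rs y -> lev y x -> y = x.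

Definition num_generators {d} (rs : list (pt d)) (n : nat) : Prop :=
  exists l : list (pt d), NoDup l /\ length l = n /\
    forall x, In x l <-> generator rs x.

Definition coords_distinct2 {d} (r1 r2 : pt d) : Prop :=
  (forall i j : 'I_d, i <> j -> r1 i <> r1 j) /\
  (forall i j : 'I_d, i <> j -> r2 i <> r2 j) /\
  (forall i j : 'I_d, r1 i <> r2 j).

(* Main.v *)
Require Import Defs.
From mathcomp Require Import all_boot.
From Stdlib Require Import Reals List.
From mathcomp Require Import zify.
From Stdlib Require Import Classical FunctionalExtensionality Lra.

Lemma In_in_seq (T:eqType) (x:T) (s : list T) : In x s -> x \in s.
Proof. elim: s => //= y s IH [->|H]; rewrite seq.in_cons ?eqxx //.
by rewrite (IH H) orbT.
Qed.

Lemma in_seq_In (T:eqType) (x:T) (s : list T) : x \in s -> In x s.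
Proof. elim: s => //= y s IH; rewrite seq.in_cons => /orP [/eqP->|/IH]; auto. Qed.

Lemma uniq_NoDup' (T:eqType) (s: list T) : uniq s -> NoDup s.
Proof.
elim: s => [|x s IH] /=; first by constructor.
move=> /andP [Hx Hs]; constructor; last by apply IH.
by move=> /(@In_in_seq T) H; rewrite H in Hx.
Qed.

Lemma In_filter' (T:Type) (p:pred T) x (s : list T) :
  In x (seq.filter p s) <-> In x s /\ p x.
Proof.
elim: s => [|y s IH] /=; first tauto.
case Hp: (p y) => /=; rewrite IH; split.
- by move=> [<-|[]]; auto.
- by move=> [[<-|H] Hx]; auto.
- by move=> [H Hx]; auto.
- move=> [[E|H] Hx]; last by auto. by subst; rewrite Hp in Hx.
Qed.

Lemma NoDup_filter' (T:Type) (p:pred T) (s : list T) :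
  NoDup s -> NoDup (seq.filter p s).
Proof.
elim: s => [|y s IH] /=; first by constructor.
move=> H; inversion H; subst. case: (p y).
- constructor; last by auto. by move=> /In_filter' [].
- by auto.
Qed.

Lemma size_length (T:Type) (s:list T) : size s = length s.
Proof. by elim: s => //= _ s ->. Qed.

Lemma NoDup_map_in (A B:Type) (f:A->B) (l : list A) :
  (forall x y, In x l -> In y l -> f x = f y -> x = y) -> NoDup l -> NoDup (map f l).
Proof.
elim: l => [|x l IH] Hinj Hnd /=; first by constructor.
inversion Hnd; subst. constructor.
- move=> /in_map_iff [y [Hy Hin]].
  have E : y = x by apply Hinj; simpl; auto.
  by subst.
- apply IH => //. move=> u v Hu Hv; apply Hinj; simpl; auto.
Qed.

Lemma NoDup_prod' (A B:Type) (l : list A) (l' : list B) :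
  NoDup l -> NoDup l' -> NoDup (list_prod l l').
Proof.
elim: l => [|x l IH] Hnd Hnd' /=; first by constructor.
inversion Hnd; subst. apply NoDup_app.
- apply NoDup_map_in => //. by move=> u v _ _ [].
- by apply IH.
- move=> [u v] /in_map_iff [w [[E1 E2] _]] /in_prod_iff [Hu _]. by subst.
Qed.

Section Two.
Variables (d : nat) (r1 r2 : pt d).
Hypotheses (H1 : in_unit_cube_oo r1) (H2 : in_unit_cube_oo r2)
  (Hdist : forall i j, r1 i <> r2 j).

Local Notation rs := (r1 :: r2 :: nil).

Definition single (i : 'I_d) : pt d :=
  fun k => if k == i then Rmax (r1 i) (r2 i) else 0%R.
Definition pair2 (i j : 'I_d) : pt d :=
  fun k => if k == i then r1 i else if k == j then r2 j else 0%R.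

Lemma notlt_ex (x r : pt d) : ~ ltv x r -> exists k, (r k <= x k)%R.
Proof.
move=> H; apply NNPP => Hn; apply H => k; apply Rnot_le_lt => Hk; apply Hn.
by exists k.
Qed.

Lemma S_iff x : in_record_region rs x <->
  in_unit_cube_co x /\ (exists k, (r1 k <= x k)%R) /\ (exists k, (r2 k <= x k)%R).
Proof.
split.
- move=> [Hc Hr]; split; first done; split; apply notlt_ex; apply Hr; simpl; auto.
- move=> [Hc [[k Hk] [k' Hk']]]; split; first done.
  move=> r [<-|[<-|[]]] Hlt; [have := Hlt k | have := Hlt k']; lra.
Qed.

Lemma single_S i : in_record_region rs (single i).
Proof.
apply S_iff; split; [| split; exists i; rewrite /single eqxx].
- move=> k; rewrite /single; case: (k == i); last lra.
  have := H1 i; have := H2 i; have := Rmax_l (r1 i) (r2 i).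
  have := Rmax_lub_lt (r1 i) (r2 i) 1. lra.
- exact: Rmax_l.
- exact: Rmax_r.
Qed.

Lemma pair_S i j : i <> j -> in_record_region rs (pair2 i j).
Proof.
move=> Hij.
have Eji : (j == i) = false by apply/eqP; auto.
apply S_iff; split; [| split; [exists i | exists j]; rewrite /pair2 ?eqxx ?Eji ?eqxx; lra].
move=> k; rewrite /pair2; have := H1 i; have := H2 j.
case: (k == i); case: (k == j); lra.
Qed.

Lemma gen_single i : generator rs (single i).
Proof.
split; first exact: single_S.
move=> y /S_iff [Hc [[k Hk] [k' Hk']]] Hle.
have Hki : k = i.
{ case E: (k == i); first exact/eqP.
  have := Hle k; rewrite /single E; have := H1 k; lra. }
have Hk'i : k' = i.
{ case E: (k' == i); first exact/eqP.
  have := Hle k'; rewrite /single E; have := H2 k'; lra. }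
subst k k'.
apply functional_extensionality => m.
have Hm := Hle m; have Hcm := Hc m; rewrite /single in Hm *.
case E: (m == i) in Hm *.
- move/eqP: E => E; subst m. apply Rle_antisym => //. by apply Rmax_lub.
- lra.
Qed.

Lemma gen_pair i j : (r1 i < r2 i)%R -> (r2 j < r1 j)%R -> generator rs (pair2 i j).
Proof.
move=> Hi Hj.
have Hij : i <> j by move=> E; subst; lra.
have Eji : (j == i) = false by apply/eqP; auto.
split; first exact: pair_S.
move=> y /S_iff [Hc [[k Hk] [k' Hk']]] Hle.
have Hki : k = i.
{ case E: (k == i); first exact/eqP.
  case E2: (k == j).
  - move/eqP: E2 => E2; subst k. have := Hle j; rewrite /pair2 Eji eqxx. lra.
  - have := Hle k; rewrite /pair2 E E2; have := H1 k; lra. }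
have Hk'j : k' = j.
{ case E: (k' == j); first exact/eqP.
  case E2: (k' == i).
  - move/eqP: E2 => E2; subst k'. have := Hle i; rewrite /pair2 eqxx. lra.
  - have := Hle k'; rewrite /pair2 E E2; have := H2 k'; lra. }
subst k k'.
apply functional_extensionality => m.
have Hm := Hle m; have Hcm := Hc m; rewrite /pair2 in Hm *.
case E: (m == i) in Hm *.
- move/eqP: E => E; subst m. lra.
- case E2: (m == j) in Hm *.
  + move/eqP: E2 => E2; subst m. lra.
  + lra.
Qed.

Lemma single_le k x : in_unit_cube_co x -> (r1 k <= x k)%R -> (r2 k <= x k)%R ->
  lev (single k) x.
Proof.
move=> Hc Hk Hk' m; rewrite /single. case E: (m == k).
- move/eqP: E => ->; by apply Rmax_lub.
- by have := Hc m; lra.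
Qed.

Lemma gen_char x : generator rs x ->
  (exists i, x = single i) \/
  (exists i j, (r1 i < r2 i)%R /\ (r2 j < r1 j)%R /\ x = pair2 i j).
Proof.
move=> [HS Hmin]. have [Hc [[k Hk] [k' Hk']]] := proj1 (S_iff x) HS.
case: (eqVneq k k') => [Ekk|Nkk].
- left. subst k'. exists k. symmetry; apply Hmin; first exact: single_S.
  exact: single_le.
- have Nkk' : k <> k' by apply/eqP.
  have Ek'k : (k' == k) = false by apply/eqP; auto.
  have Hp : x = pair2 k k'.
  { symmetry; apply Hmin; first exact: pair_S.
    move=> m; rewrite /pair2. case E: (m == k).
    - by move/eqP: E => ->.
    - case E2: (m == k'); first by move/eqP: E2 => ->.
      by have := Hc m; lra. }
  right; exists k, k'. split; [|split; auto].
  + destruct (Rtotal_order (r1 k) (r2 k)) as [?|[Heq|Hlt]]; first done.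
    * exfalso; exact: (Hdist _ _ Heq).
    * exfalso.
      have Hs : single k = x.
      { apply Hmin; first exact: single_S. apply single_le => //; lra. }
      have := f_equal (fun f => f k') Hs. rewrite Hp /single /pair2 Ek'k eqxx => E.
      have := H2 k'; lra.
  + destruct (Rtotal_order (r1 k') (r2 k')) as [Hlt|[Heq|?]]; last done.
    * exfalso.
      have Hs : single k' = x.
      { apply Hmin; first exact: single_S. apply single_le => //; lra. }
      have := f_equal (fun f => f k) Hs.
      have Ekk' : (k == k') = false by apply/eqP.
      rewrite Hp /single /pair2 Ekk' eqxx => E.
      have := H1 k; lra.
    * exfalso; exact: (Hdist _ _ Heq).
Qed.


Definition Af (i : 'I_d) : bool := if Rlt_dec (r1 i) (r2 i) then true else false.
Definition Bf (i : 'I_d) : bool := if Rlt_dec (r2 i) (r1 i) then true else false.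

Definition Lgen : list (pt d) :=
  (map single (enum 'I_d) ++
   map (fun p => pair2 p.1 p.2)
     (list_prod (seq.filter Af (enum 'I_d)) (seq.filter Bf (enum 'I_d))))%list.

Lemma In_enum (i : 'I_d) : In i (enum 'I_d).
Proof. apply in_seq_In. by rewrite mem_enum. Qed.

Lemma Lgen_spec x : In x Lgen <-> generator rs x.
Proof.
rewrite /Lgen in_app_iff !in_map_iff. split.
- move=> [[i [<- _]]|[[i j] [<- Hin]]]; first exact: gen_single.
  move/in_prod_iff: Hin => [/In_filter' [_ Ha] /In_filter' [_ Hb]].
  move: Ha Hb; rewrite /Af /Bf.
  case: Rlt_dec => // ? _; case: Rlt_dec => // ? _. exact: gen_pair.
- move/gen_char => [[i ->]|[i [j [Hi [Hj ->]]]]].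
  + left; exists i; split => //; exact: In_enum.
  + right; exists (i, j); split => //. apply/in_prod_iff; split; apply/In_filter';
    (split; first exact: In_enum); rewrite /Af /Bf; by case: Rlt_dec.
Qed.

Lemma Lgen_NoDup : NoDup Lgen.
Proof.
have Hen : NoDup (enum 'I_d) by apply uniq_NoDup'; apply enum_uniq.
apply NoDup_app.
- apply NoDup_map_in => // i j _ _ E.
  apply/eqP; apply/negPn/negP => Nij.
  have := f_equal (fun f => f i) E. rewrite /single eqxx.
  have -> : (i == j) = false by apply/negbTE.
  have := Rmax_l (r1 i) (r2 i); have := H1 i; lra.
- apply NoDup_map_in; last by apply NoDup_prod'; apply NoDup_filter'.
  move=> [i j] [i' j'] /in_prod_iff [/In_filter' [_ Ha] /In_filter' [_ Hb]]
    /in_prod_iff [/In_filter' [_ Ha'] /In_filter' [_ Hb']] /= E.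
  move: Ha Hb Ha' Hb'; rewrite /Af /Bf.
  case: Rlt_dec => // Hi _; case: Rlt_dec => // Hj _.
  case: Rlt_dec => // Hi' _; case: Rlt_dec => // Hj' _.
  have Eji : (j == i) = false by apply/eqP => E'; subst; lra.
  have Eji' : (j' == i') = false by apply/eqP => E'; subst; lra.
  have Ei : i = i'.
  { have := f_equal (fun f => f i) E. rewrite /pair2 eqxx.
    case E1: (i == i'); first by move/eqP: E1.
    case E2: (i == j').
    - move/eqP: E2 => E2; subst. move=> Hx; exfalso; exact: (Hdist _ _ Hx).
    - have := H1 i; lra. }
  have Ej : j = j'.
  { have := f_equal (fun f => f j) E. rewrite /pair2 eqxx Eji.
    case E1: (j == i').
    - move/eqP: E1 => E1; subst. move=> Hx; exfalso; exact: (Hdist _ _ (esym Hx)).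
    - case E2: (j == j'); first by move/eqP: E2.
      have := H2 j; lra. }
  by subst.
- move=> x /in_map_iff [i [<- _]] /in_map_iff [[i' j'] [E Hin]].
  move/in_prod_iff: Hin => [/In_filter' [_ Ha] /In_filter' [_ Hb]].
  move: Ha Hb; rewrite /Af /Bf.
  case: Rlt_dec => // Hi _; case: Rlt_dec => // Hj _.
  have Eji : (j' == i') = false by apply/eqP => E'; subst; lra.
  simpl in E.
  case E1: (i' == i).
  + move/eqP: E1 => E1; subst i'.
    have := f_equal (fun f => f j') E. rewrite /single /pair2 Eji eqxx => Ex.
    have := H2 j'; lra.
  + have := f_equal (fun f => f i') E. rewrite /single /pair2 E1 eqxx => Ex.
    have := H1 i'; lra.
Qed.

Lemma Bf_predC : Bf =1 predC Af.
Proof.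
move=> j; rewrite /Bf /Af /=.
case: Rlt_dec => H; case: Rlt_dec => H' //=; first lra.
exfalso. destruct (Rtotal_order (r1 j) (r2 j)) as [?|[Heq|?]]; auto.
exact: (Hdist _ _ Heq).
Qed.

Definition acnt := count Af (enum 'I_d).

Lemma Lgen_length : length Lgen = (d + acnt * (d - acnt))%N.
Proof.
rewrite /Lgen length_app !length_map length_prod -!size_length !size_filter
  -?enumT ?size_enum_ord.
have := count_predC Af (enum 'I_d). rewrite size_enum_ord.
rewrite (eq_count Bf_predC) /acnt. move=> H.
have E : count (predC Af) (enum 'I_d) = d - count Af (enum 'I_d) by lia.
rewrite E. reflexivity.
Qed.

Lemma num_gen_iff g : num_generators rs g <-> g = (d + acnt * (d - acnt))%N.
Proof.
split.
- move=> [l [Hnd [Hlen Hiff]]].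
  have h1 := NoDup_incl_length Hnd (l' := Lgen)
    ltac:(by move=> x /Hiff /Lgen_spec).
  have h2 := NoDup_incl_length Lgen_NoDup (l' := l)
    ltac:(by move=> x /Lgen_spec /Hiff).
  rewrite -Lgen_length -Hlen. exact: Nat.le_antisymm.
- move=> ->. exists Lgen; split; first exact: Lgen_NoDup.
  split; first exact: Lgen_length. move=> x; exact: Lgen_spec.
Qed.

Lemma acnt_bounds : incomparable r1 r2 -> (1 <= acnt)%N /\ (acnt < d)%N.
Proof.
move=> [Hn1 Hn2].
have [k Hk] : exists k, ~ (r2 k <= r1 k)%R by apply NNPP => H; apply Hn2 => k;
  apply NNPP => H'; apply H; exists k.
have [k' Hk'] : exists k, ~ (r1 k <= r2 k)%R by apply NNPP => H; apply Hn1 => m;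
  apply NNPP => H'; apply H; exists m.
split.
- rewrite /acnt -has_count. apply/hasP; exists k; first by rewrite mem_enum.
  rewrite /Af; case: Rlt_dec => // ?; lra.
- have := count_predC Af (enum 'I_d). rewrite size_enum_ord -(eq_count Bf_predC).
  have : (0 < count Bf (enum 'I_d))%N.
  { rewrite -has_count. apply/hasP; exists k'; first by rewrite mem_enum.
    rewrite /Bf; case: Rlt_dec => // ?; lra. }
  rewrite /acnt. lia.
Qed.

End Two.

Definition fR (d n : nat) : R := (INR (n + 1) / INR (2 * d + 1))%R.

Lemma fR_lt d m n : (m < n)%N -> (fR d m < fR d n)%R.
Proof.
move=> H; rewrite /fR. apply Rmult_lt_compat_r.
- apply Rinv_0_lt_compat, lt_0_INR; lia.
- apply lt_INR; lia.
Qed.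

Lemma fR_inj d m n : fR d m = fR d n -> m = n.
Proof.
move=> E. case: (ltngtP m n) => // H; have := @fR_lt d _ _ H; lra.
Qed.

Lemma fR_unit d n : (n < 2 * d)%N -> (0 < fR d n)%R /\ (fR d n < 1)%R.
Proof.
move=> H; rewrite /fR. have Hp : (0 < INR (2 * d + 1))%R by apply lt_0_INR; lia.
split.
- apply Rdiv_lt_0_compat => //; apply lt_0_INR; lia.
- apply (Rmult_lt_reg_r (INR (2 * d + 1))) => //.
  rewrite /Rdiv Rmult_assoc Rinv_l; last lra.
  rewrite Rmult_1_r Rmult_1_l. apply lt_INR; lia.
Qed.

Lemma count_lt_iota a n : count (fun m => (m < a)%N) (iota 0 n) = minn a n.
Proof.
elim: n => [|n IH]; first by rewrite minn0.
rewrite -addn1 iotaD count_cat IH /= add0n addn0.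
case: ltnP => H /=; lia.
Qed.

Theorem mainTheorem5 (d : nat) (hd : (2 <= d)%N) (g : nat) :
  (exists r1 r2 : pt d,
      in_unit_cube_oo r1 /\ in_unit_cube_oo r2 /\
      incomparable r1 r2 /\ coords_distinct2 r1 r2 /\
      num_generators (r1 :: r2 :: nil) g)
  <->
  (exists a : nat, (1 <= a)%N /\ (a <= d./2)%N /\ g = (d + a * (d - a))%N).
Proof.
have Hh := odd_double_half d. rewrite -muln2 in Hh.
have Ho : (odd d <= 1)%N by case: (odd d).
move: Hh Ho; set o : nat := nat_of_bool (odd d); set h := d./2 => Hh Ho.
split.
- move=> [r1 [r2 [H1 [H2 [Hinc [[_ [_ Hd3]] Hg]]]]]].
  move/(@num_gen_iff _ r1 r2 H1 H2 Hd3): Hg => Hg.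
  have [Hlo Hhi] := @acnt_bounds _ r1 r2 Hd3 Hinc.
  set a := acnt d r1 r2 in Hg Hlo Hhi.
  case: (leqP a d./2) => Ha.
  + exists a; split => //.
  + exists (d - a). split; first lia. split.
    * lia.
    * rewrite Hg. have -> : (d - (d - a) = a)%N by lia. by rewrite mulnC.
- move=> [a [Ha1 [Ha2 ->]]].
  have Had : (a < d)%N.
  { lia. }
  pose c1 (i : 'I_d) := if (i < a)%N then nat_of_ord i else (d + i)%N.
  pose c2 (i : 'I_d) := if (i < a)%N then (d + i)%N else nat_of_ord i.
  pose r1 : pt d := fun i => fR d (c1 i).
  pose r2 : pt d := fun i => fR d (c2 i).
  have Hb1 : forall i, (c1 i < 2 * d)%N.
  { move=> i; have := ltn_ord i; rewrite /c1; case: ifP => _; lia. }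
  have Hb2 : forall i, (c2 i < 2 * d)%N.
  { move=> i; have := ltn_ord i; rewrite /c2; case: ifP => _; lia. }
  have H1 : in_unit_cube_oo r1 by move=> i; apply fR_unit.
  have H2 : in_unit_cube_oo r2 by move=> i; apply fR_unit.
  have Hd3 : forall i j, r1 i <> r2 j.
  { move=> i j /fR_inj. have := ltn_ord i; have := ltn_ord j.
    rewrite /c1 /c2; case: ifP => ?; case: ifP => ?; lia. }
  have Hd1 : forall i j : 'I_d, i <> j -> r1 i <> r1 j.
  { move=> i j Nij /fR_inj E. apply Nij; apply val_inj; move: E.
    have := ltn_ord i; have := ltn_ord j.
    rewrite /c1; case: ifP => ?; case: ifP => ? /=; lia. }
  have Hd2 : forall i j : 'I_d, i <> j -> r2 i <> r2 j.
  { move=> i j Nij /fR_inj E. apply Nij; apply val_inj; move: E.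
    have := ltn_ord i; have := ltn_ord j.
    rewrite /c2; case: ifP => ?; case: ifP => ? /=; lia. }
  have HA : forall i, (r1 i < r2 i)%R <-> (i < a)%N.
  { move=> i; have := ltn_ord i; rewrite /r1 /r2 /c1 /c2.
    case: ifP => Hi Hid; split => // H.
    - apply fR_lt; lia.
    - have : (fR d i < fR d (d + i))%R by apply fR_lt; lia.
      lra. }
  exists r1, r2. split => //; split => //; split; [|split].
  + have Hd0 : (0 < d)%N by lia.
    have Hdm : (d - 1 < d)%N by lia.
    split.
    * move=> Hle. set k := Ordinal Hdm.
      have Hn : ~ (r1 k < r2 k)%R.
      { move=> Hk. have := proj1 (HA k) Hk. rewrite /=. lia. }
      have Hne := Hd3 k k. have Hl := Hle k. apply Hne; lra.
    * move=> Hle. set k := Ordinal Hd0.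
      have Hk : (r1 k < r2 k)%R by apply (proj2 (HA k)).
      have Hl := Hle k. lra.
  + by split; [|split].
  + apply (@num_gen_iff _ r1 r2 H1 H2 Hd3).
    suff -> : acnt d r1 r2 = a by [].
    rewrite /acnt.
    have -> : count (Af d r1 r2) (enum 'I_d) = count (fun i : 'I_d => (i < a)%N) (enum 'I_d).
    { apply eq_count => i. rewrite /Af. case: Rlt_dec => H.
      - by rewrite (proj1 (HA i) H).
      - symmetry; apply/negbTE/negP => Hi; apply H; exact (proj2 (HA i) Hi). }
    have -> : count (fun i : 'I_d => (i < a)%N) (enum 'I_d)
      = count (fun m => (m < a)%N) [seq val i | i <- enum 'I_d]
      by rewrite count_map.
    rewrite val_enum_ord count_lt_iota. lia.
Qed.
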